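(* For $n\ge 2$, the number of interval-closed sets of $[2]\times[n]$ is \[|\mathcal{IC}([2]\times[n])|=1+2\left(\binom n2+n\right)+\frac{n+1}{2}\binom{n+2}{3}.\] Here $1$ counts the empty set, $2(\binom n2+n)$ counts the nonempty interval-closed sets contained entirely in the chain $\{(1,i)\}$ or entirely in the chain $\{(2,i)\}$, and $\frac{n+1}{2}\binom{n+2}{3}$ counts those meeting both chains.
   Context: $[n]$ is the chain $1<\cdots<n$; $[2]\times[n]$ is the Cartesian product poset with $(a,b)\le(c,d)$ iff $a\le c$ and $b\le d$. A subset $I$ of a poset is interval-closed if for all $x,y\in I$ and $z$ with $x\le z\le y$ we have $z\in I$; $\mathcal{IC}(P)$ is the set of interval-closed subsets. *)

(* Defs.v *)
From mathcomp Require Import all_boot all_order all_algebra.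
Set Implicit Arguments. Unset Strict Implicit. Unset Printing Implicit Defensive.

(* The poset [2] x [n]: elements are pairs (a,b) with a : 'I_2, b : 'I_n
   (0-indexed; (a,b) stands for (a+1,b+1)), ordered componentwise. *)
Definition le2n (n : nat) (x y : 'I_2 * 'I_n) : bool :=
  ((x.1 : nat) <= y.1) && ((x.2 : nat) <= y.2).

Definition interval_closed (n : nat) (I : {set 'I_2 * 'I_n}) : bool :=
  [forall x in I, forall y in I, forall z,
     (le2n x z && le2n z y) ==> (z \in I)].

Definition IC2n (n : nat) : {set {set 'I_2 * 'I_n}} :=
  [set I | interval_closed I].

(* Main.v *)
Require Import Defs.
From mathcomp Require Import all_boot all_order all_algebra.
From mathcomp Require Import zify ring.
Import GRing.Theory Num.Theory.

Section S.
Variable n : nat.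
Definition X := ('I_n * 'I_n)%type.
Definition rowmem (o : option X) (k : nat) : bool :=
  if o is Some p then ((p.1 <= k) && (k <= p.2))%N else false.
Definition vopt (o : option X) : bool := if o is Some p then (p.1 <= p.2)%N else true.
Definition compat (o0 o1 : option X) : bool :=
  match o0, o1 with Some p, Some q => ((q.1 <= p.1) && (q.2 <= p.2))%N | _, _ => true end.
Definition valid (p : option X * option X) : bool :=
  [&& vopt p.1, vopt p.2 & compat p.1 p.2].
Definition gg (p : option X * option X) : {set 'I_2 * 'I_n} :=
  [set x : 'I_2 * 'I_n | rowmem (if (x.1 : nat) == 0%N then p.1 else p.2) x.2].

Lemma rowmem_inj (o1 o2 : option X) : vopt o1 -> vopt o2 ->
  (forall k : 'I_n, rowmem o1 k = rowmem o2 k) -> o1 = o2.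
Proof.
case: o1 => [[a b]|]; case: o2 => [[c d]|] //= hab hcd H.
- have h1 := H a; have h2 := H b; have h3 := H c; have h4 := H d.
  rewrite /= in h1 h2 h3 h4.
  have ac : a = c by apply: val_inj => /=; move: h1 h3; rewrite hab hcd !leqnn /=; lia.
  have bd : b = d by apply: val_inj => /=; move: h2 h4; rewrite hab hcd !leqnn /=; lia.
  by rewrite ac bd.
- by have := H a; rewrite /= leqnn hab.
- by have := H c; rewrite /= leqnn hcd.
Qed.

Lemma gg_inj : {in [set p | valid p] &, injective gg}.
Proof.
move=> [p1 p2] [q1 q2]; rewrite !inE /valid /= => /and3P[v1 v2 _] /and3P[w1 w2 _] E.
have E' : forall x : 'I_2 * 'I_n, (x \in gg (p1, p2)) = (x \in gg (q1, q2)) by move=> x; rewrite E.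
congr pair; apply: rowmem_inj => // k.
- by have := E' (@ord0 1, k); rewrite !inE.
- by have := E' (@ord_max 1, k); rewrite !inE.
Qed.

Lemma gg_IC p : valid p -> interval_closed (gg p).
Proof.
case: p => [o0 o1]; rewrite /valid /= => /and3P[v0 v1 c].
apply/forall_inP => x; rewrite inE => xI; apply/forall_inP => y; rewrite inE => yI.
apply/forallP => z; apply/implyP; rewrite /le2n => /andP[/andP[h1 h2] /andP[h3 h4]].
rewrite inE.
move: x y z xI yI h1 h2 h3 h4 => [[x1 hx1] x2] [[y1 hy1] y2] [[z1 hz1] z2] /=.
case: o0 v0 c => [[a b]|]; case: o1 v1 => [[c d]|] /=;
 (case: x1 hx1 => [|[|?]] //= _; case: y1 hy1 => [|[|?]] //= _;
  case: z1 hz1 => [|[|?]] //= _); lia.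
Qed.

Lemma row_interval (P : pred 'I_n)
  (Hc : forall i j k : 'I_n, P i -> P j -> (i <= k)%N -> (k <= j)%N -> P k) :
  exists o, vopt o /\ forall k : 'I_n, P k = rowmem o k.
Proof.
case: (pickP P) => [k0 Pk0 | P0]; last by exists None; split => // k; rewrite P0.
case: (arg_minnP (fun k : 'I_n => (k : nat)) Pk0) => a Pa amin.
case: (arg_maxnP (fun k : 'I_n => (k : nat)) Pk0) => b Pb bmax.
exists (Some (a, b)); split; first exact: amin.
move=> k /=; apply/idP/idP.
- by move=> Pk; rewrite amin //; exact: (bmax _ Pk).
- by move=> /andP[h1 h2]; apply: (Hc a b).
Qed.

Lemma IC_gg (I : {set 'I_2 * 'I_n}) : interval_closed I ->
  exists2 p, valid p & I = gg p.
Proof.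
move=> HI.
have conv : forall (r : 'I_2) (i j k : 'I_n), (r, i) \in I -> (r, j) \in I ->
    (i <= k)%N -> (k <= j)%N -> (r, k) \in I.
  move=> r i j k hi hj ik kj.
  move/forall_inP: HI => /(_ _ hi) /forall_inP /(_ _ hj) /forallP /(_ (r, k)).
  by rewrite /le2n /= leqnn ik kj.
have [o0 [v0 H0]] := @row_interval (fun k => (@ord0 1, k) \in I) (conv (@ord0 1)).
have [o1 [v1 H1]] := @row_interval (fun k => (@ord_max 1, k) \in I) (conv (@ord_max 1)).
have eqI : I = gg (o0, o1).
  apply/setP => -[[r hr] k]; rewrite inE /=.
  case: r hr => [|[|?]] // hr.
  - by rewrite -H0; congr (_ \in I); congr pair; apply: val_inj.
  - by rewrite -H1; congr (_ \in I); congr pair; apply: val_inj.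
exists (o0, o1) => //.
rewrite /valid /= v0 v1 /=.
case: o0 v0 H0 {eqI} => [[a b]|] //; case: o1 v1 H1 => [[c d]|] //= v1 H1 v0 H0.
case: (leqP a d) => ad.
- have := HI; move/forall_inP => /(_ (@ord0 1, a)).
  rewrite H0 /= leqnn v0 => /(_ isT) /forall_inP /(_ (@ord_max 1, d)).
  rewrite H1 /= leqnn v1 andbT => /(_ isT) /forallP => Hz.
  have := Hz (@ord_max 1, a); rewrite /le2n /= leqnn ad /= H1 /= => /andP[-> _].
  have := Hz (@ord0 1, d); rewrite /le2n /= leqnn ad /= H0 /= => /andP[_ ->].
  done.
- apply/andP; split; lia.
Qed.

Lemma card_IC : #|IC2n n| = #|[set p | valid p]|.
Proof.
rewrite -(card_in_imset gg_inj); apply: eq_card => I.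
rewrite [in LHS]inE; apply/idP/imsetP.
- by move/IC_gg => [p vp ->]; exists p; rewrite ?inE.
- by move=> [p]; rewrite inE => vp ->; apply: gg_IC.
Qed.
End S.
Lemma big_opt (T : finType) (F : option T -> nat) :
  \sum_(o : option T) F o = F None + \sum_(x : T) F (Some x).
Proof.
rewrite -(big_map Some xpredT F).
transitivity (\sum_(o <- None :: [seq Some x | x <- index_enum T]) F o); last by rewrite big_cons.
apply: perm_big; apply: uniq_perm.
- exact: index_enum_uniq.
- rewrite /= map_inj_uniq ?index_enum_uniq //; last by move=> ? ? [].
  rewrite andbT; apply/mapP => -[x _]; done.
- move=> [x|]; rewrite mem_index_enum inE //=.
  by rewrite (mem_map (fun a b (h : Some a = Some b) => ltac:(case: h => ->; done))) mem_index_enum.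
Qed.

Lemma card_valid n : #|[set p | @valid n p]| =
  1 + 2 * (\sum_(a < n) \sum_(b < n) (a <= b : nat)) +
  \sum_(a < n) \sum_(b < n) \sum_(c < n) \sum_(d < n)
      ([&& a <= b, c <= d, c <= a & d <= b] : nat).
Proof.
rewrite -sum1_card big_mkcond /=.
rewrite (eq_bigr (fun p : option (X n) * option (X n) => (@valid n p : nat))); last first.
  by move=> p _; rewrite inE; case: (@valid n p).
rewrite -(pair_bigA _ (fun o0 o1 => (@valid n (o0, o1) : nat))) /=.
rewrite big_opt big_opt.
rewrite [X in _ + X = _](eq_bigr (fun x => (@valid n (Some x, None) : nat) + \sum_y (@valid n (Some x, Some y) : nat))); last first.
  by move=> x _; rewrite big_opt.
rewrite big_split /= -!addnA; congr (_ + _).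
rewrite add0n; congr (_ + (_ + _)).
- rewrite -(pair_bigA _ (fun a b => (@valid n (None, Some (a, b)) : nat))).
  by apply: eq_bigr => a _; apply: eq_bigr => b _; rewrite /valid /= andbT.
- rewrite -(pair_bigA _ (fun a b => (@valid n (Some (a, b), None) : nat))).
  by apply: eq_bigr => a _; apply: eq_bigr => b _; rewrite /valid /= andbT.
rewrite -(pair_bigA _ (fun a b => \sum_y (@valid n (Some (a, b), Some y) : nat))).
apply: eq_bigr => a _; apply: eq_bigr => b _.
rewrite -(pair_bigA _ (fun c d => (@valid n (Some (a, b), Some (c, d)) : nat))).
apply: eq_bigr => c _; apply: eq_bigr => d _.
rewrite /valid /=.
by case: (a <= b)%N; case: (c <= d)%N; case: (c <= a)%N; case: (d <= b)%N.
Qed.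
Lemma L1 n a : \sum_(b < n) (a <= b : nat) = n - a.
Proof.
elim: n => [|n IH]; first by rewrite big_ord0.
rewrite big_ord_recr /= IH; case: (leqP a n) => h /=; lia.
Qed.

Lemma L2 n c b : \sum_(d < n) ((c <= d) && (d <= b) : nat) = minn b.+1 n - c.
Proof.
elim: n => [|n IH]; first by rewrite big_ord0 minn0.
rewrite big_ord_recr /= IH; case: (leqP c n) => h1; case: (leqP n b) => h2 /=; lia.
Qed.

Lemma S2eq n : \sum_(a < n) \sum_(b < n) (a <= b : nat) = 'C(n, 2) + n.
Proof.
rewrite (eq_bigr (fun a : 'I_n => n - a)); last by move=> a _; rewrite L1.
elim: n => [|n IH]; first by rewrite big_ord0.
rewrite big_ord_recr /=.
rewrite (eq_bigr (fun a : 'I_n => (n - a) + 1)); last first.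
  move=> a _ /=; have := ltn_ord a; lia.
rewrite big_split /= IH sum_nat_const card_ord muln1 binS bin1; lia.
Qed.

Definition W m := \sum_(c < m) (m - c) ^ 2.

Lemma W_ext m k : \sum_(c < m + k) (m - c) ^ 2 = W m.
Proof.
elim: k => [|k IH]; first by rewrite addn0.
rewrite addnS big_ord_recr /= IH. have -> : m - (m + k) = 0 by lia. by rewrite addn0.
Qed.

Lemma W_closed m : 6 * W m = m * m.+1 * (2 * m + 1).
Proof.
rewrite /W; elim: m => [|m IH]; first by rewrite big_ord0.
rewrite big_ord_recl /= subn0.
rewrite (eq_bigr (fun i : 'I_m => (m - i) ^ 2)); last by move=> i _; rewrite /bump /= add1n subSS.
rewrite mulnDr IH; lia.
Qed.

Lemma Q_eq n :
  \sum_(a < n) \sum_(b < n) \sum_(c < n) \sum_(d < n)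
      ([&& a <= b, c <= d, c <= a & d <= b] : nat) =
  \sum_(b < n) W b.+1.
Proof.
transitivity (\sum_(a < n) \sum_(b < n) \sum_(c < n)
   ((a <= b) && (c <= a) : nat) * (b.+1 - c)).
  apply: eq_bigr => a _; apply: eq_bigr => b _; apply: eq_bigr => c _.
  have hb := ltn_ord b.
  have E : \sum_(d < n) ((c <= d) && (d <= b) : nat) = b.+1 - c by rewrite L2; lia.
  rewrite -E big_distrr /=; apply: eq_bigr => d _.
  by case: (a <= b)%N; case: (c <= d)%N; case: (c <= a)%N; case: (d <= b)%N.
rewrite exchange_big /=.
apply: eq_bigr => b _.
rewrite exchange_big /=.
have hb := ltn_ord b.
rewrite -(W_ext b.+1 (n - b.+1)); have -> : b.+1 + (n - b.+1) = n by lia.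
apply: eq_bigr => c _.
rewrite -big_distrl /=.
have E : \sum_(d < n) ((c <= d) && (d <= b) : nat) = b.+1 - c by rewrite L2; lia.
rewrite -E expnS expn1; congr (_ * _); apply: eq_bigr => a _.
by case: (a <= b)%N; case: (c <= a)%N.
Qed.

Lemma Q_closed n : 12 * \sum_(b < n) W b.+1 = n * n.+1 * n.+1 * n.+2.
Proof.
elim: n => [|n IH]; first by rewrite big_ord0.
rewrite big_ord_recr /= mulnDr IH.
have := W_closed n.+1; lia.
Qed.

Lemma C3 n : 6 * 'C(n + 2, 3) = (n + 2) * (n + 1) * n.
Proof.
have := bin_ffact n.+2 3; rewrite !ffactnS ffactn0 /=.
have -> : 3`! = 6 by [].
rewrite addn2; lia.
Qed.

Local Open Scope ring_scope.

Theorem theorem4p2 (n : nat) (hn : (2 <= n)%N) :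
  (#|IC2n n|)%:R =
    1 + 2 * ('C(n, 2) + n)%:R + ((n + 1)%:R / 2) * ('C(n + 2, 3))%:R :> rat.
Proof.
rewrite card_IC card_valid S2eq Q_eq.
set Q := (\sum_(b < n) W b.+1)%N.
have HQ : ((n + 1) * 'C(n + 2, 3) = 2 * Q)%N.
  have h1 := Q_closed n; have h2 := C3 n; rewrite -/Q in h1.
  nia.
have E : (n + 1)%:R / 2 * ('C(n + 2, 3))%:R = Q%:R :> rat.
  rewrite mulrAC -natrM HQ natrM mulrAC mulfV ?mul1r //.
rewrite E !natrD addr0; ring.
Qed.
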